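(* Let $n\ge p\ge1$, $0<\varepsilon<1$, $\lambda>0$. For every $X\in\mathbb{R}^{n\times p}$ with $\|X^\top X-I_p\|\le\varepsilon$ and every skew-symmetric $A\in\mathbb{R}^{n\times n}$, the field $F(X,A)=AX+\lambda X(X^\top X-I_p)$ satisfies $$\|AX\|^2+4\lambda^2(1-\varepsilon)\mathcal{N}(X)\le\|F(X,A)\|^2\le\|AX\|^2+4\lambda^2(1+\varepsilon)\mathcal{N}(X),$$ where $\mathcal{N}(X)=\frac14\|X^\top X-I_p\|^2$.
   Context: $\|\cdot\|$ denotes the Frobenius norm. Note $\nabla\mathcal{N}(X)=X(X^\top X-I_p)$, so $F(X,A)=AX+\lambda\nabla\mathcal{N}(X)$. *)

(* Defs.v *)
From HB Require Import structures.
From mathcomp Require Import all_boot all_order all_algebra.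
Set Implicit Arguments. Unset Strict Implicit. Unset Printing Implicit Defensive.
Import Order.TTheory GRing.Theory Num.Theory.
Local Open Scope ring_scope.

Definition frob (R : rcfType) (m n : nat) (M : 'M[R]_(m, n)) : R :=
  Num.sqrt (\sum_(i < m) \sum_(j < n) M i j ^+ 2).

Definition skew (R : rcfType) (n : nat) (A : 'M[R]_n) : Prop := A^T = - A.

Definition Nfun (R : rcfType) (n p : nat) (X : 'M[R]_(n, p)) : R :=
  4^-1 * frob (X^T *m X - 1%:M) ^+ 2.

Definition Ffield (R : rcfType) (n p : nat) (lambda : R)
  (X : 'M[R]_(n, p)) (A : 'M[R]_n) : 'M[R]_(n, p) :=
  A *m X + lambda *: (X *m (X^T *m X - 1%:M)).

(* Main.v *)
Set Warnings "-all".
From HB Require Import structures.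
From mathcomp Require Import all_boot all_order all_algebra.
From mathcomp Require Import ring lra.
Import Order.TTheory GRing.Theory Num.Theory.
Local Open Scope ring_scope.

Lemma cs_vec (R : realFieldType) (I : finType) (a b : I -> R) :
  (\sum_i a i * b i) ^+ 2 <= (\sum_i a i ^+ 2) * (\sum_i b i ^+ 2).
Proof.
set A := \sum_i a i ^+ 2; set B := \sum_i b i ^+ 2; set C := \sum_i a i * b i.
have key : forall x y : R, 0 <= x ^+ 2 * A - 2 * x * y * C + y ^+ 2 * B.
  move=> x y.
  have -> : x ^+ 2 * A - 2 * x * y * C + y ^+ 2 * B = \sum_i (x * a i - y * b i) ^+ 2.
    rewrite /A /B /C !mulr_sumr -!sumrN -!big_split /=.
    by apply: eq_bigr => i _; ring.
  by apply: sumr_ge0 => i _; apply: sqr_ge0.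
have hA : 0 <= A by apply: sumr_ge0 => i _; apply: sqr_ge0.
have hB : 0 <= B by apply: sumr_ge0 => i _; apply: sqr_ge0.
have h1 := key B C. have h2 := key C A. have h3 := key 1 1. have h4 := key 1 (-1).
rewrite leNgt; apply/negP => hlt.
have hd : 0 < C ^+ 2 - A * B by lra.
have e1 : B ^+ 2 * A - 2 * B * C * C + C ^+ 2 * B = - (B * (C ^+ 2 - A * B)) by ring.
have e2 : C ^+ 2 * A - 2 * C * A * C + A ^+ 2 * B = - (A * (C ^+ 2 - A * B)) by ring.
rewrite e1 oppr_ge0 pmulr_lle0 // in h1.
rewrite e2 oppr_ge0 pmulr_lle0 // in h2.
have B0 : B = 0 by lra.
have A0 : A = 0 by lra.
have C0 : C = 0 by lra.
move: hd; rewrite A0 B0 C0; lra.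
Qed.

Require Import Defs.

Lemma tr_ip (R : rcfType) (m n : nat) (M N : 'M[R]_(m, n)) :
  \tr (M^T *m N) = \sum_i \sum_j M i j * N i j.
Proof.
rewrite /mxtrace exchange_big /=; apply: eq_bigr => j _.
by rewrite mxE; apply: eq_bigr => i _; rewrite mxE.
Qed.

Lemma tr_ge0 (R : rcfType) (m n : nat) (M : 'M[R]_(m, n)) : 0 <= \tr (M^T *m M).
Proof.
by rewrite tr_ip; apply: sumr_ge0 => i _; apply: sumr_ge0 => j _; rewrite -expr2; apply: sqr_ge0.
Qed.

Lemma frob2 (R : rcfType) (m n : nat) (M : 'M[R]_(m, n)) :
  frob M ^+ 2 = \tr (M^T *m M).
Proof.
rewrite /frob sqr_sqrtr; last first.
  by apply: sumr_ge0 => i _; apply: sumr_ge0 => j _; apply: sqr_ge0.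
by rewrite tr_ip; apply: eq_bigr => i _; apply: eq_bigr => j _; rewrite expr2.
Qed.

Lemma cs_tr (R : rcfType) (m n : nat) (M N : 'M[R]_(m, n)) :
  \tr (M^T *m N) ^+ 2 <= \tr (M^T *m M) * \tr (N^T *m N).
Proof.
rewrite !tr_ip !pair_big /=.
have := @cs_vec R _ (fun p : 'I_m * 'I_n => M p.1 p.2) (fun p => N p.1 p.2).
move=> H; apply: (le_trans H); rewrite le_eqVlt; apply/orP; left; apply/eqP; by congr (_ * _); apply: eq_bigr => i _; rewrite expr2.
Qed.

Lemma submult (R : rcfType) (m k n : nat) (M : 'M[R]_(m, k)) (N : 'M[R]_(k, n)) :
  \tr ((M *m N)^T *m (M *m N)) <= \tr (M^T *m M) * \tr (N^T *m N).
Proof.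
rewrite !tr_ip (exchange_big _ _ _ _ _ (fun l j => N l j * N l j)) /= mulr_suml.
apply: ler_sum => i _; rewrite mulr_sumr; apply: ler_sum => j _.
rewrite !mxE -expr2.
have := @cs_vec R _ (fun l => M i l) (fun l => N l j).
move=> H; apply: (le_trans H); rewrite le_eqVlt; apply/orP; left; apply/eqP.
by congr (_ * _); apply: eq_bigr => l _; rewrite expr2.
Qed.

Theorem proposition2 (R : rcfType) (n p : nat) (eps lambda : R)
  (X : 'M[R]_(n, p)) (A : 'M[R]_n) :
  (1 <= p)%N -> (p <= n)%N -> 0 < eps -> eps < 1 -> 0 < lambda ->
  frob (X^T *m X - 1%:M) <= eps -> skew A ->
  frob (A *m X) ^+ 2 + 4 * lambda ^+ 2 * (1 - eps) * Nfun X
    <= frob (Ffield lambda X A) ^+ 2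
  /\ frob (Ffield lambda X A) ^+ 2
    <= frob (A *m X) ^+ 2 + 4 * lambda ^+ 2 * (1 + eps) * Nfun X.
Proof.
move=> _ _ eps0 eps1 l0 hS hA.
rewrite /Nfun /Ffield.
set S := X^T *m X - 1%:M in hS *.
have ST : S^T = S.
  apply/matrixP => i j; rewrite /S !mxE; congr (_ - _).
    by apply: eq_bigr => k _; rewrite !mxE mulrC.
  by rewrite eq_sym.
have XX : X^T *m X = S + 1%:M by rewrite /S subrK.
set P := A *m X. set Q := X *m S.
have hF : frob (P + lambda *: Q) ^+ 2
    = \tr (P^T *m P) + 2 * lambda * \tr (P^T *m Q) + lambda ^+ 2 * \tr (Q^T *m Q).
  have tD : (P + lambda *: Q)^T = P^T + lambda *: Q^T by apply/matrixP => i j; rewrite !mxE.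
  rewrite frob2 tD !mulmxDl !mulmxDr -!scalemxAl -!scalemxAr.
  rewrite !mxtraceD !mxtraceZ.
  have -> : \tr (Q^T *m P) = \tr (P^T *m Q) by rewrite -mxtrace_tr trmx_mul trmxK.
  ring.
have hC : \tr (P^T *m Q) = 0.
  set K := X^T *m A *m X.
  have KT : K^T = - K.
    by rewrite /K !trmx_mul trmxK hA mulNmx mulmxN mulmxA.
  have e1 : \tr (P^T *m Q) = - \tr (K *m S).
    by rewrite /P /Q /K trmx_mul hA mulmxN mulNmx raddfN !mulmxA.
  have e2 : \tr (K *m S) = - \tr (K *m S).
    by rewrite -{1}mxtrace_tr trmx_mul ST KT mulmxN raddfN mxtrace_mulC.
  have : \tr (K *m S) = 0 by lra.
  by rewrite e1 => ->; rewrite oppr0.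
set a := \tr (S^T *m S).
set c := \tr (S^T *m (S *m S)).
have hQ : \tr (Q^T *m Q) = a + c.
  rewrite /Q trmx_mul mulmxA -(mulmxA _ X^T) XX /a /c ST mulmxDr mulmx1 mulmxDl mxtraceD.
  by rewrite addrC !mulmxA.
have ha : 0 <= a by apply: tr_ge0.
have hfa : frob S ^+ 2 = a by rewrite frob2.
have hf0 : 0 <= frob S by rewrite /frob sqrtr_ge0.
have hc2 : c ^+ 2 <= a * (a * a).
  apply: (le_trans (@cs_tr _ _ _ S (S *m S))); rewrite -/a; apply: ler_wpM2l => //.
  exact: (@submult _ _ _ _ S S).
have hc : c ^+ 2 <= (eps * a) ^+ 2.
  apply: (le_trans hc2).
  have h1 : a <= eps ^+ 2 by rewrite -hfa; nra.
  have h2 : 0 <= a * a by apply: mulr_ge0.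
  have -> : (eps * a) ^+ 2 = eps ^+ 2 * (a * a) by ring.
  by apply: ler_wpM2r.
have hea : 0 <= eps * a by apply: mulr_ge0 => //; apply: ltW.
have c1 : - (eps * a) <= c by nra.
have c2 : c <= eps * a by nra.
rewrite hF hC hQ frob2 hfa.
have hl : 0 <= lambda ^+ 2 by apply: sqr_ge0.
split; nra.
Qed.
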